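(* Let $\rho$ be a measure on $(0,\infty)$ such that $\int_{(b,\infty)}s^{-1/2}\rho(\mathrm{d}s)<\infty$ for all $b>0$. Then $\mathfrak{A}(\rho)$ is definable.
   Context: A measure $\sigma$ on $(0,\infty)$ is locally finite on $(0,\infty)$ if $\sigma((b,c))<\infty$ whenever $0<b<c<\infty$. For a measure $\rho$ on $(0,\infty)$, $\mathfrak{A}(\rho)$ is said to be definable if the function $u\mapsto\int_{(u,\infty)}\pi^{-1/2}(s-u)^{-1/2}\rho(\mathrm{d}s)$ is the density (with respect to Lebesgue measure on $(0,\infty)$) of a locally finite measure on $(0,\infty)$; this measure is then denoted $\mathfrak{A}(\rho)(\mathrm{d}u)=\big(\int_{(u,\infty)}\pi^{-1/2}(s-u)^{-1/2}\rho(\mathrm{d}s)\big)\mathrm{d}u$. *)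

(* Defs.v *)
From HB Require Import structures.
From mathcomp Require Import all_boot all_order all_algebra.
From mathcomp Require Import all_classical all_reals all_analysis measurable_realfun.
Set Implicit Arguments. Unset Strict Implicit. Unset Printing Implicit Defensive.
Import Order.TTheory GRing.Theory Num.Theory.
Import numFieldNormedType.Exports.
Local Open Scope classical_set_scope.
Local Open Scope ring_scope.
Local Open Scope ereal_scope.

(* Measures on (0,oo) are represented by (Borel) measures on R; only their
   restriction to (0,oo) is ever used (all integrals are over subsets of (0,oo)). *)

Definition Adens (R : realType) (rho : {measure set R -> \bar R}) (u : R) : \bar R :=
  \int[rho]_(s in `]u, +oo[%classic) ((Num.sqrt pi)^-1 * (Num.sqrt (s - u))^-1)%:E.

(* A(rho) is definable: Adens rho is (measurable on (0,oo), hence) the density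
   w.r.t. Lebesgue measure of a measure on (0,oo), and that measure
   E |-> \int_E Adens rho is locally finite on (0,oo). *)
Definition A_definable (R : realType) (rho : {measure set R -> \bar R}) : Prop :=
  measurable_fun `](0%R : R), +oo[%classic (Adens rho) /\
  (forall b c : R, (0 < b)%R -> (b < c)%R ->
     \int[lebesgue_measure]_(u in `]b, c[%classic) Adens rho u < +oo).

(* Main.v *)
Require Import Defs.
From HB Require Import structures.
From mathcomp Require Import all_boot all_order all_algebra.
From mathcomp Require Import all_classical all_reals all_analysis measurable_realfun.
Import Order.TTheory GRing.Theory Num.Theory.
Import numFieldNormedType.Exports.
Local Open Scope classical_set_scope.
Local Open Scope ring_scope.
Local Open Scope ereal_scope.
From mathcomp Require Import ring lra.
Section S1. Local Open Scope ring_scope.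
Lemma dF (R : realType) (s u : R) : (u < s)%R ->
  is_derive u 1 (fun v => -2 * Num.sqrt (s - v))%R ((Num.sqrt (s-u))^-1)%R.
Proof.
move=> us.
have su0 : (0 < s - u)%R by rewrite subr_gt0.
have H1 : is_derive u (1:R) (fun v : R => s - v)%R (-1)%R.
  have := @is_deriveB R R R (cst s) id u 1 0 1.
  rewrite sub0r => /(_ _ _); apply => //.
have H2 : derivable (fun v : R => Num.sqrt (s - v))%R u 1.
  apply/derivable1_diffP.
  have -> : (fun v : R => Num.sqrt (s - v))%R = Num.sqrt \o (fun v => s - v)%R by [].
  apply: differentiable_comp.
    by apply/derivable1_diffP; case: H1.
  apply/derivable1_diffP.
  by case: (is_derive1_sqrt su0).
have H3 : 'D_1 (fun v : R => Num.sqrt (s - v))%R u = (- (2 * Num.sqrt (s - u))^-1)%R.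
  rewrite -derive1E.
  have -> : (fun v : R => Num.sqrt (s - v))%R = Num.sqrt \o (fun v => s - v)%R by [].
  rewrite derive1_comp; last 2 first.
    by case: H1.
    by case: (is_derive1_sqrt su0).
  rewrite !derive1E (@derive_val _ _ _ _ _ _ _ H1) /=.
  by rewrite (@derive_val _ _ _ _ _ _ _ (is_derive1_sqrt su0)) mulrN1.
have H4 : is_derive u 1 (fun v : R => Num.sqrt (s - v))%R (- (2 * Num.sqrt (s - u))^-1)%R.
  by apply: DeriveDef.
have := @is_deriveZ R R R _ (-2)%R u 1 _ H4.
have -> : (-2 : R) \*: (fun v : R => Num.sqrt (s - v))%R = (fun v => -2 * Num.sqrt (s - v))%R.
  by apply/funext => v.
suff -> : ((-2 : R) *: - (2 * Num.sqrt (s - u))^-1 = (Num.sqrt (s-u))^-1)%R by [].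
have sq0 : (Num.sqrt (s - u) != 0)%R by rewrite gt_eqF// sqrtr_gt0.
rewrite /GRing.scale /=. by field.
Qed.
End S1.
Section S2. Local Open Scope ring_scope.
Lemma msqrtV (R : realType) : measurable_fun setT (fun x : R => (Num.sqrt x)^-1)%R.
Proof.
have -> : (fun x : R => (Num.sqrt x)^-1)%R = (fun y : R => powR y (-1)) \o (@Num.sqrt R).
  by apply/funext => x /=; rewrite powR_inv1.
apply: measurableT_comp. exact: measurable_powR.
apply: continuous_measurable_fun. exact: sqrt_continuous.
Qed.

Lemma contf (R : realType) (s x : R) : x < s ->
  {for x, continuous (fun u : R => (Num.sqrt (s - u))^-1)}.
Proof.
move=> xs; apply: continuousV.
  by rewrite gt_eqF// sqrtr_gt0 subr_gt0.
apply: (@continuous_comp _ _ _ (fun u : R => s - u) (@Num.sqrt R)).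
  by apply: continuousB => //; exact: cvg_cst.
exact: sqrt_continuous.
Qed.
End S2.

Lemma sing_FTC (R : realType) (s a b : R) : (a < b)%R -> (b < s)%R ->
  \int[lebesgue_measure]_(u in `[a, b]) ((Num.sqrt (s - u))^-1)%:E =
  (-2 * Num.sqrt (s - b))%:E - (-2 * Num.sqrt (s - a))%:E.
Proof.
move=> ab bs.
apply: (@continuous_FTC2 R (fun u : R => (Num.sqrt (s - u))^-1)%R
   (fun v => -2 * Num.sqrt (s - v))%R).
- exact: ab.
- apply: continuous_in_subspaceT => x; rewrite inE/= in_itv/= => /andP[_ xb].
  by apply: contf; exact: le_lt_trans bs.
- have cF : forall x, (x < s)%R -> {for x, continuous (fun v : R => -2 * Num.sqrt (s - v))%R}.
    move=> x xs; have [d _] := @dF R s x xs.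
    exact/differentiable_continuous/derivable1_diffP.
  split.
  + move=> x; rewrite in_itv/= => /andP[_ xb].
    by case: (@dF R s x (lt_trans xb bs)).
  + by apply: cvg_at_right_filter; apply: cF; exact: lt_trans bs.
  + by apply: cvg_at_left_filter; apply: cF.
- move=> x; rewrite in_itv/= => /andP[_ xb].
  by rewrite derive1E (@derive_val _ _ _ _ _ _ _ (@dF R s x (lt_trans xb bs))).
Qed.
Lemma sing (R : realType) (s L : R) : (0 < L)%R ->
  \int[lebesgue_measure]_(u in `](s - L)%R, s[) ((Num.sqrt (s - u))^-1)%:E <= (2 * Num.sqrt L)%:E.
Proof.
move=> L0.
have mh : measurable_fun setT (fun u : R => ((Num.sqrt (s - u))^-1)%:E).
  apply/measurable_EFinP.
  apply: (measurableT_comp (msqrtV R)).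
  by apply: measurable_funB => //.
pose B n := `[(s - L)%R, (s - L / n.+2%:R)%R]%classic : set R.
have mB n : measurable (B n) by exact: measurable_itv.
have Lpos n : (0 < L / n.+2%:R)%R by rewrite divr_gt0.
have Llt n : (L / n.+2%:R < L)%R.
  by rewrite ltr_pdivrMr// ltr_pMr// ltr1n.
have AB : `](s - L)%R, s[%classic `<=` \bigcup_n B n.
  move=> u /=; rewrite in_itv/= => /andP[lu us].
  have su0 : (0 < s - u)%R by rewrite subr_gt0.
  have := @archi_boundP R (L / (s - u)) (ltW (divr_gt0 L0 su0)).
  set k := Num.Def.archi_bound _ => Hk.
  exists k => //=; rewrite /B /= in_itv/= (ltW lu) /=.
  rewrite lerBrDr -lerBrDl.
  rewrite ler_pdivrMr// -ler_pdivrMl//.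
  rewrite mulrC; apply: ltW; apply: (lt_le_trans Hk).
  by rewrite ler_nat leqW.
have ndB : nondecreasing_seq B.
  apply/nondecreasing_seqP => n; rewrite subsetEset => x /=.
  rewrite /B/= !in_itv/= => /andP[-> xb] /=.
  apply: (le_trans xb); rewrite lerD2l lerN2.
  by rewrite ler_pM2l// lef_pV2 ?posrE// ler_nat.
have f0 : forall x : R, (0 <= ((Num.sqrt (s - x))^-1)%:E).
  by move=> x; rewrite lee_fin invr_ge0 sqrtr_ge0.
apply: (@le_trans _ _ (\int[lebesgue_measure]_(x in \bigcup_n B n) ((Num.sqrt (s - x))^-1)%:E)).
  apply: ge0_subset_integral => //.
  - by apply: bigcup_measurable => n _; exact: measurable_itv.
  - exact: (measurable_funTS mh).
have H : \int[lebesgue_measure]_(x in B i) ((Num.sqrt (s - x))^-1)%:E @[i --> \oo] -->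
    \int[lebesgue_measure]_(x in \bigcup_n B n) ((Num.sqrt (s - x))^-1)%:E.
  apply: (@ge0_nondecreasing_set_cvg_integral _ (measurableTypeR R) R B) => //.
  by move=> n; exact: (measurable_funTS mh).

rewrite -(cvg_lim _ H)//.
apply: lime_le; first by apply/cvg_ex; eexists; exact: H.
near=> n.
rewrite sing_FTC; last 2 first.
  by rewrite ltrD2l ltrN2.
  by rewrite ltrBlDr ltrDl.
have e x : (s - (s - x) = x)%R by rewrite opprB addrC subrK.
rewrite -EFinB lee_fin !e.
have := sqrtr_ge0 (L / n.+2%:R); lra.
Unshelve. all: by end_near.
Qed.
Section S3. Local Open Scope ring_scope.
Lemma invsqrt_pi_le1 (R : realType) : (Num.sqrt (pi : R))^-1 <= 1.
Proof.
rewrite invf_le1 ?sqrtr_gt0 ?pi_gt0//.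
rewrite -sqrtr1 ler_sqrt ?pi_ge0//.
by apply: le_trans (pi_ge2 R); rewrite ler1n.
Qed.

Lemma inv_sqrt_le (R : realType) (x y : R) : 0 < y -> y <= 4 * x ->
  (Num.sqrt x)^-1 <= 2 * (Num.sqrt y)^-1.
Proof.
move=> y0 yx.
have x0 : 0 < x by nra.
have sx : 0 < Num.sqrt x by rewrite sqrtr_gt0.
have sy : 0 < Num.sqrt y by rewrite sqrtr_gt0.
have H : Num.sqrt y <= 2 * Num.sqrt x.
  have -> : 2 * Num.sqrt x = Num.sqrt (4 * x).
    rewrite sqrtrM ?ler0n//; congr (_ * _).
    by rewrite (_ : 4 = 2 ^+ 2) ?sqrtr_sqr ?ger0_norm// expr2 -natrM.
  by rewrite ler_sqrt// mulr_ge0// ltW.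
set a := Num.sqrt x in sx H *; set b := Num.sqrt y in sy H *.
have ia : a * a^-1 = 1 by rewrite divff// gt_eqF.
have ib : b * b^-1 = 1 by rewrite divff// gt_eqF.
have ia0 : 0 < a^-1 by rewrite invr_gt0.
have ib0 : 0 < b^-1 by rewrite invr_gt0.
set h := a^-1 * b^-1.
have h0 : 0 < h by rewrite mulr_gt0.
have e1 : h * a = b^-1 by rewrite /h mulrAC mulVf ?mul1r// gt_eqF.
have e2 : h * b = a^-1 by rewrite /h -mulrA mulVf ?mulr1// gt_eqF.
nra.
Qed.
End S3.
Lemma mEsqrtV (R : realType) (D : set R) : measurable_fun D (fun x : R => ((Num.sqrt x)^-1)%:E).
Proof. by apply/measurable_EFinP; apply: measurable_funTS; exact: msqrtV. Qed.

Lemma rho_fin (R : realType) (rho : {measure set R -> \bar R}) (b N : R) :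
  (\int[rho]_(s in `]b, +oo[%classic) ((Num.sqrt s)^-1)%:E < +oo) ->
  (0 < b)%R -> (0 < N)%R -> rho `]b, N]%classic < +oo.
Proof.
move=> I b0 N0.
have sN : (0 < Num.sqrt N)%R by rewrite sqrtr_gt0.
have H : ((Num.sqrt N)^-1)%:E * rho `]b, N]%classic <=
    \int[rho]_(s in `]b, +oo[%classic) ((Num.sqrt s)^-1)%:E.
  rewrite -integral_cst; last exact: measurable_itv.
  apply: (@le_trans _ _ (\int[rho]_(s in `]b, N]%classic) ((Num.sqrt s)^-1)%:E)).
    apply: ge0_le_integral => //.
    - by move=> x _; rewrite /= lee_fin invr_ge0 sqrtr_ge0.
    - exact: mEsqrtV.
    - move=> x; rewrite /= in_itv/= => /andP[bx xN].
      rewrite lee_fin lef_pV2 ?posrE ?sqrtr_gt0//; last exact: lt_trans bx.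
      by rewrite ler_sqrt// ltW.
  apply: ge0_subset_integral => //.
  - exact: mEsqrtV.
  - by move=> x /=; rewrite !in_itv/= => /andP[->].
rewrite ltNge leye_eq; apply/negP => /eqP E.
move: H; rewrite E gt0_muley ?lte_fin ?invr_gt0// leye_eq => /eqP E2.
by move: I; rewrite E2 ltxx.
Qed.

Lemma sf (R : realType) (rho : {measure set R -> \bar R}) :
  (forall b : R, (0 < b)%R ->
     \int[rho]_(s in `]b, +oo[%classic) ((Num.sqrt s)^-1)%:E < +oo) ->
  sigma_finite setT (mrestr rho (measurable_itv `]0%R, +oo[)).
Proof.
move=> H.
exists (fun n => `]-oo, 0%R]%classic `|` `](n.+1%:R^-1)%R, n.+1%:R]%classic).
  apply/seteqP; split => // x _.
  have [x0|x0] := leP x 0%R; first by exists 0%N => //; left; rewrite /= in_itv/= x0.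
  have := archi_boundP (ltW x0).
  have xi : (0 < x^-1)%R by rewrite invr_gt0.
  have := archi_boundP (ltW xi).
  set k1 := Num.Def.archi_bound x^-1; set k2 := Num.Def.archi_bound x.
  move=> h1 h2.
  exists (k1 + k2)%N => //; right; rewrite /= in_itv/=; apply/andP; split.
    rewrite -[x in (_ < x)%R]invrK ltf_pV2 ?posrE ?ltr0n//.
    apply: (lt_trans h1); rewrite ltr_nat ltnS leq_addr //.
  apply: ltW; apply: (lt_le_trans h2); rewrite ler_nat -addSn leq_addl //.
move=> n; split.
  by apply: measurableU; exact: measurable_itv.
rewrite /mrestr.
apply: (@le_lt_trans _ _ (rho `](n.+1%:R^-1)%R, n.+1%:R]%classic)).
  apply: le_measure.
  - rewrite inE; apply: measurableI; last exact: measurable_itv.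
    by apply: measurableU; exact: measurable_itv.
  - by rewrite inE; exact: measurable_itv.
  - move=> x [[|]]; rewrite /= !in_itv/= ?andbT //.
    by move=> x0 x0'; move: (le_lt_trans x0 x0'); rewrite ltxx.
apply: rho_fin => //.
by apply: H; rewrite invr_gt0 ltr0n.
Qed.
Section S4. Local Open Scope ring_scope.
Lemma ineq1 (R : realType) (c s : R) : 0 < s -> s <= 2 * c ->
  2 * Num.sqrt (2 * c) <= 4 * c * (Num.sqrt s)^-1.
Proof.
move=> s0 sc.
have c2 : 0 <= 2 * c by apply: le_trans sc; exact: ltW.
have q0 : 0 < Num.sqrt s by rewrite sqrtr_gt0.
have qr : Num.sqrt s <= Num.sqrt (2 * c) by rewrite ler_sqrt.
have r2 : Num.sqrt (2 * c) ^+ 2 = 2 * c by rewrite sqr_sqrtr.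
set q := Num.sqrt s in q0 qr *; set r := Num.sqrt (2 * c) in qr r2 *.
have iq0 : 0 < q^-1 by rewrite invr_gt0.
set h := r * q^-1.
have h0 : 0 <= h by apply: mulr_ge0; [exact: sqrtr_ge0|exact: ltW].
have e1 : h * q = r by rewrite /h -mulrA mulVf ?mulr1// gt_eqF.
have e2 : r * h = 2 * c * q^-1 by rewrite /h mulrA -expr2 r2.
nra.
Qed.
End S4.
Definition gg {R : realType} (x : R) : \bar R :=
  ((Num.sqrt pi)^-1 * (Num.sqrt x)^-1)%:E.

Lemma gg_ge0 (R : realType) (x : R) : 0 <= gg x.
Proof. by rewrite lee_fin mulr_ge0// invr_ge0 sqrtr_ge0. Qed.

Lemma gg_le (R : realType) (x : R) : gg x <= ((Num.sqrt x)^-1)%:E.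
Proof.
rewrite lee_fin; apply: (@le_trans _ _ (1 * (Num.sqrt x)^-1)%R); last by rewrite mul1r.
by rewrite ler_wpM2r ?invr_ge0 ?sqrtr_ge0// invsqrt_pi_le1.
Qed.

Lemma gg0 (R : realType) (x : R) : (x <= 0)%R -> gg x = 0.
Proof. by move=> x0; rewrite /gg (ler0_sqrtr x0) invr0 mulr0. Qed.

Lemma mgg (R : realType) : measurable_fun setT (@gg R).
Proof.
apply/measurable_EFinP; apply: measurable_funM => //.
exact: msqrtV.
Qed.

Lemma mgs (R : realType) (s : R) : measurable_fun setT (fun x : R => gg (s - x)).
Proof.
 apply: (measurableT_comp (mgg R)).
by apply: measurable_funB.
Qed.

Lemma mhs (R : realType) (s : R) :
  measurable_fun setT (fun x : R => ((Num.sqrt (s - x))^-1)%:E).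
Proof.
apply/measurable_EFinP; apply: (measurableT_comp (msqrtV R)).
by apply: measurable_funB.
Qed.

Theorem lemma2p6 (R : realType) (rho : {measure set R -> \bar R}) :
  (forall b : R, (0 < b)%R ->
     \int[rho]_(s in `]b, +oo[%classic) ((Num.sqrt s)^-1)%:E < +oo) ->
  A_definable rho.
Proof.
move=> H.
have mD : measurable (`]0%R, +oo[%classic : set R) by exact: measurable_itv.
pose m : {sigma_finite_measure set R -> \bar R} :=
  HB.pack (mrestr rho (measurable_itv `]0%R, +oo[))
    (Measure_isSigmaFinite.Build _ _ _ (mrestr rho (measurable_itv `]0%R, +oo[)) (@sf R rho H)).
pose f0 := fun z : R * R => gg (z.2 - z.1).
have mf0 : measurable_fun setT f0.
  apply: (measurableT_comp (mgg R)).
  by apply: measurable_funB; [exact: measurable_snd|exact: measurable_fst].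
have f00 : forall z, 0 <= f0 z by move=> z; exact: gg_ge0.
have Aeq : forall u : R, (0 < u)%R -> Adens rho u = fubini_F m f0 u.
  move=> u u0.
  rewrite /Adens /fubini_F /f0 /=.
  transitivity (\int[rho]_(s in `]0%R, +oo[) gg (s - u)).
    rewrite [LHS]integral_mkcond [RHS]integral_mkcond; apply: eq_integral => s _.
    rewrite /patch; case: ifPn => su; case: ifPn => s0 //.
    - exfalso; move/negP: s0; apply.
      move: su => /set_mem; rewrite /= in_itv /= andbT => us.
      by apply/mem_set; rewrite /= in_itv /= andbT; exact: lt_trans us.
    - rewrite gg0 //.
      rewrite subr_le0 leNgt; apply/negP => us; move/negP: su; apply.
      by apply/mem_set; rewrite /= in_itv /= andbT.
  transitivity (\int[m]_(s in `]0%R, +oo[) gg (s - u)).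
    apply: eq_measure_integral => A mA AD /=.
    by rewrite /mrestr setIidl.
  rewrite integral_mkcond; apply: eq_integral => s _; rewrite /patch.
  case: ifPn => // s0; rewrite gg0 //.
  have : (s <= 0)%R.
    rewrite leNgt; apply/negP => s0'; move/negP: s0; apply.
    by apply/mem_set; rewrite /= in_itv /= andbT.
  move=> s0'; rewrite subr_le0; exact: (le_trans s0' (ltW u0)).
split.
  apply: (@eq_measurable_fun _ _ _ _ _ (fubini_F m f0)).
    by move=> u; rewrite inE /= in_itv /= andbT => u0; rewrite Aeq.
  apply: measurable_funTS.
  exact: (measurable_fun_fubini_tonelli_F (m2 := m) f0 mf0 f00).
move=> b c b0 bc.
have c0 : (0 < c)%R := lt_trans b0 bc.
pose I := `]b, c[%classic : set R.
pose f1 := fun z : measurableTypeR R * R => (\1_I z.1)%:E * gg (z.2 - z.1).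
have mfst : measurable_fun (T := (measurableTypeR R * R)%type) (U := R) setT fst.
  exact: measurable_fst.
have mf1 : measurable_fun setT f1.
  apply: emeasurable_funM => //.
    apply/measurable_EFinP.
    have -> : (fun z : measurableTypeR R * R => \1_I z.1) = \1_I \o fst by [].
    apply: measurableT_comp; last exact: measurable_fst.
    by apply: measurable_indic; exact: measurable_itv.
have f10 : forall z, 0 <= f1 z.
  by move=> z; rewrite /f1 mule_ge0// ?lee_fin ?indicE ?ler0n// gg_ge0.
apply: (@le_lt_trans _ _ (\int[lebesgue_measure]_u fubini_F m f1 u)).
  rewrite le_eqVlt; apply/orP; left; apply/eqP.
  rewrite integral_mkcond; apply: eq_integral => u _; rewrite /patch /fubini_F /f1 /=.
  case: ifPn => uI.
    rewrite Aeq; last first.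
      by move: uI => /set_mem; rewrite /= in_itv /= => /andP[bu _]; exact: lt_trans bu.
    by apply: eq_integral => s _; rewrite indicE uI mul1e.
  by rewrite integral0_eq // => s _; rewrite indicE (negbTE uI) mul0e.
rewrite /fubini_F (fubini_tonelli f1) //.
pose K := fun s : R => (\1_(`]b, +oo[%classic) s)%:E * ((4 * c) * (Num.sqrt s)^-1)%:E.
have K0 : forall s, 0 <= K s.
  move=> s; rewrite /K mule_ge0// lee_fin ?indicE ?ler0n//.
  by rewrite mulr_ge0 ?invr_ge0 ?sqrtr_ge0// mulr_ge0// ltW.
have mK : measurable_fun setT K.
  apply: emeasurable_funM => //.
    apply/measurable_EFinP.
    by apply: measurable_indic; exact: measurable_itv.
  apply/measurable_EFinP; apply: measurable_funM => //.
  exact: msqrtV.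
apply: (@le_lt_trans _ _ (\int[m]_s K s)).
  apply: ge0_le_integral => //.
  - by move=> s _; apply: integral_ge0 => x _; exact: f10.
  - exact: (measurable_fun_fubini_tonelli_G (m1 := lebesgue_measure) f1 mf1 f10).
  - move=> s _; rewrite /f1 /=.
    apply: (@le_trans _ _ (\int[lebesgue_measure]_(x in `]b, c[) gg (s - x))).
      rewrite le_eqVlt; apply/orP; left; apply/eqP.
      rewrite [RHS]integral_mkcond; apply: eq_integral => x _.
      by rewrite /patch indicE; case: ifPn => _; rewrite ?mul1e ?mul0e.
    have [sb|bs] := leP s b.
      rewrite integral0_eq ?K0 // => x /=; rewrite in_itv /= => /andP[bx _].
      by apply: gg0; rewrite subr_le0; exact: le_trans sb (ltW bx).
    rewrite /K indicE (_ : s \in _ = true) ?mul1e; last first.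
      by apply/mem_set; rewrite /= in_itv /= andbT.
    have [s2c|s2c] := leP s (2 * c)%R.
      apply: (@le_trans _ _ (\int[lebesgue_measure]_(x in `]b, c[) ((Num.sqrt (s - x))^-1)%:E)).
        apply: ge0_le_integral => //.
        - by move=> x _; exact: gg_ge0.
        - exact: (measurable_funTS (@mgs R s)).
        - exact: (measurable_funTS (@mhs R s)).
        - by move=> x _; exact: gg_le.
      apply: (@le_trans _ _ (\int[lebesgue_measure]_(x in `](s - 2 * c)%R, +oo[) ((Num.sqrt (s - x))^-1)%:E)).
        apply: ge0_subset_integral => //.
        - exact: (measurable_funTS (@mhs R s)).
        - move=> x /=; rewrite !in_itv /= andbT => /andP[bx _].
          apply: le_lt_trans bx; apply: (le_trans _ (ltW b0)); by rewrite subr_le0.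
      apply: (@le_trans _ _ (\int[lebesgue_measure]_(x in `](s - 2 * c)%R, s[) ((Num.sqrt (s - x))^-1)%:E)).
        rewrite le_eqVlt; apply/orP; left; apply/eqP.
        rewrite integral_mkcond [RHS]integral_mkcond; apply: eq_integral => x _; rewrite /patch.
        case: ifPn => h1; case: ifPn => h2 //.
          move: h1 => /set_mem; rewrite /= in_itv /= andbT => h1.
          have xs : (s <= x)%R.
            rewrite leNgt; apply/negP => xs; move/negP: h2; apply.
            by apply/mem_set; rewrite /= in_itv /= h1.
          by rewrite ler0_sqrtr ?invr0 // subr_le0.
        exfalso; move/negP: h1; apply; move: h2 => /set_mem; rewrite /= in_itv /= => /andP[h2 _].
        by apply/mem_set; rewrite /= in_itv /= h2.
      apply: (le_trans (@sing R s (2 * c)%R _)); first by rewrite mulr_gt0.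
      rewrite lee_fin; apply: ineq1 => //; exact: lt_trans bs.
    apply: (@le_trans _ _ (\int[lebesgue_measure]_(x in `]b, c[) (cst (2 * (Num.sqrt s)^-1)%:E x))).
      apply: ge0_le_integral => //.
      - by move=> x _; exact: gg_ge0.
      - exact: (measurable_funTS (@mgs R s)).
      - move=> x; rewrite /= in_itv /= => /andP[bx xc].
        apply: (le_trans (@gg_le R (s - x))); rewrite lee_fin; apply: inv_sqrt_le.
          exact: lt_trans bs.
        lra.
    rewrite integral_cst; last exact: measurable_itv.
    have E : lebesgue_measure (`]b, c[%classic : set R) = (c - b)%:E.
      by rewrite lebesgue_measure_itv /= lte_fin bc EFinB.
    set LL := (X in _ * X <= _).
    have -> : LL = (c - b)%:E by exact: E.
    rewrite -EFinM lee_fin.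
    have : (0 <= (Num.sqrt s)^-1)%R by rewrite invr_ge0 sqrtr_ge0.
    nra.
have -> : \int[m]_s K s =
    (4 * c)%:E * \int[rho]_(s in `]b, +oo[%classic) ((Num.sqrt s)^-1)%:E.
  transitivity (\int[m]_(s in `]b, +oo[%classic) ((4 * c) * (Num.sqrt s)^-1)%:E).
    rewrite [RHS]integral_mkcond; apply: eq_integral => s _.
    by rewrite /patch /K indicE; case: ifPn => _; rewrite ?mul1e ?mul0e.
  transitivity (\int[rho]_(s in `]b, +oo[%classic) ((4 * c) * (Num.sqrt s)^-1)%:E).
    apply: eq_measure_integral => A mA Ab /=.
    rewrite /mrestr setIidl // => x /Ab /=; rewrite !in_itv /= !andbT.
    exact: lt_trans b0.
  under eq_integral do rewrite EFinM.
  apply: ge0_integralZl_EFin => //.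
  - exact: mEsqrtV.
  - by rewrite mulr_ge0// ltW.
rewrite lte_mul_pinfty//; last exact: (H b b0).
by rewrite lee_fin mulr_ge0// ltW.
Qed.
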